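(* Fix a monomial order on $S$. Let $J$ be a binomial ideal of $S$ (an ideal generated by binomials) and $E$ a monomial ideal of $S$. Then $J+E=J+\widehat E$.
   Context: $K$ is a field and $S=K[x_1,\ldots,x_n]$ with a fixed monomial order. For $0\neq f\in S$, $\mathrm{in}(f)$ denotes its leading monomial; for an ideal $I$, $\mathrm{in}(I)$ is the ideal generated by the leading monomials of the nonzero elements of $I$. A pair $(J,E)$ of ideals is G-nice if $\mathrm{in}(J+E)=\mathrm{in}(J)+\mathrm{in}(E)$. For an ideal $J$ and a monomial ideal $E$, $\widehat E$ (the G-nice monomial closure of $E$ with respect to $J$) is the intersection of all monomial ideals $F$ of $S$ with $E\subseteq F$ and $(J,F)$ G-nice. *)

(* Defs.v *)
From HB Require Import structures.
From mathcomp Require Import all_boot all_order all_algebra.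
From mathcomp Require Import mpoly.
Set Implicit Arguments. Unset Strict Implicit. Unset Printing Implicit Defensive.
Import GRing.Theory.
Local Open Scope ring_scope.

(* Ideals of S = K[x_1,...,x_n] are represented as predicates (Prop-valued). *)
Section Defs.
Variables (K : fieldType) (n : nat).
Local Notation S := {mpoly K[n]}.
Local Notation mon := 'X_{1..n}.

(* A monomial order on the monomials 'X_{1..n}: a total order, compatible
   with multiplication of monomials (= addition of exponent vectors), and
   with 1 (= exponent 0) as least element. *)
Definition monomial_order (le : rel mon) : Prop :=
  [/\ reflexive le, antisymmetric le, transitive le, total le &
      ((forall m, le 0%MM m) /\
       (forall m1 m2 m, le m1 m2 -> le (m1 + m)%MM (m2 + m)%MM))].

(* leading monomial in(f): the le-maximum of the support of f
   (meaningful for f != 0 and le a total order). *)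
Definition lead_mon (le : rel mon) (f : S) : mon :=
  foldr (fun m acc => if le acc m then m else acc) 0%MM (msupp f).

Definition is_ideal (I : S -> Prop) : Prop :=
  [/\ I 0, (forall a b, I a -> I b -> I (a + b)) &
      (forall r a, I a -> I (r * a))].

Definition gen_ideal (G : S -> Prop) : S -> Prop :=
  fun p => forall I, is_ideal I -> (forall g, G g -> I g) -> I p.

Definition ideal_sum (I1 I2 : S -> Prop) : S -> Prop :=
  fun p => exists a b, [/\ I1 a, I2 b & p = a + b].

Definition ideal_eq (I1 I2 : S -> Prop) : Prop := forall p, I1 p <-> I2 p.

Definition is_monomial (p : S) : Prop := exists m : mon, p = 'X_[m].

Definition is_binomial (p : S) : Prop := (size (msupp p) <= 2)%N.

Definition is_monomial_ideal (E : S -> Prop) : Prop :=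
  exists G : S -> Prop, (forall g, G g -> is_monomial g) /\ ideal_eq E (gen_ideal G).

Definition is_binomial_ideal (J : S -> Prop) : Prop :=
  exists G : S -> Prop, (forall g, G g -> is_binomial g) /\ ideal_eq J (gen_ideal G).

Definition init_ideal (le : rel mon) (I : S -> Prop) : S -> Prop :=
  gen_ideal (fun q => exists f, [/\ I f, f != 0 & q = 'X_[lead_mon le f]]).

Definition G_nice (le : rel mon) (J E : S -> Prop) : Prop :=
  ideal_eq (init_ideal le (ideal_sum J E))
           (ideal_sum (init_ideal le J) (init_ideal le E)).

(* \hat E: intersection of all monomial ideals F with E ⊆ F and (J,F) G-nice *)
Definition Gnice_closure (le : rel mon) (J E : S -> Prop) : S -> Prop :=
  fun p => forall F : S -> Prop, is_monomial_ideal F ->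
    (forall q, E q -> F q) -> G_nice le J F -> F p.

End Defs.

(* Main.v *)
Require Import Defs.
From HB Require Import structures.
From mathcomp Require Import all_boot all_order all_algebra.
From mathcomp Require Import mpoly.
From mathcomp Require Import zify.
From Stdlib Require Import ClassicalEpsilon.
Set Implicit Arguments. Unset Strict Implicit. Unset Printing Implicit Defensive.
Import GRing.Theory.
Local Open Scope ring_scope.

Section Aux.
Variables (K : fieldType) (n : nat).
Local Notation S := {mpoly K[n]}.
Local Notation mon := 'X_{1..n}.

Lemma gen_ideal_is_ideal (G : S -> Prop) : is_ideal (gen_ideal G).
Proof.
split.
- by move=> I [I0 _ _] _.
- move=> a b Ha Hb I HI HG; case: (HI) => _ HD _; exact: HD (Ha I HI HG) (Hb I HI HG).
- move=> r a Ha I HI HG; case: (HI) => _ _ HM; exact: HM (Ha I HI HG).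
Qed.

Lemma gen_ideal_sub (G : S -> Prop) g : G g -> gen_ideal G g.
Proof. by move=> Gg I _ HG; apply: HG. Qed.

Lemma gen_ideal_min (G : S -> Prop) (I : S -> Prop) :
  is_ideal I -> (forall g, G g -> I g) -> forall p, gen_ideal G p -> I p.
Proof. by move=> HI HG p Hp; apply: Hp. Qed.

Lemma ideal0 (I : S -> Prop) : is_ideal I -> I 0.
Proof. by case. Qed.

Lemma idealD (I : S -> Prop) a b : is_ideal I -> I a -> I b -> I (a + b).
Proof. by case=> _ HD _; apply: HD. Qed.

Lemma idealM (I : S -> Prop) r a : is_ideal I -> I a -> I (r * a).
Proof. by case=> _ _ HM; apply: HM. Qed.

Lemma ideal_eq_ideal (I1 I2 : S -> Prop) : ideal_eq I1 I2 -> is_ideal I2 -> is_ideal I1.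
Proof.
move=> E [H0 HD HM]; split.
- by apply/E.
- by move=> a b /E Ha /E Hb; apply/E; apply: HD.
- by move=> r a /E Ha; apply/E; apply: HM.
Qed.

Lemma ideal_sum_ideal (I1 I2 : S -> Prop) :
  is_ideal I1 -> is_ideal I2 -> is_ideal (ideal_sum I1 I2).
Proof.
move=> [A0 AD AM] [B0 BD BM]; split.
- by exists 0, 0; rewrite addr0.
- move=> _ _ [a1 [b1 [Ha1 Hb1 ->]]] [a2 [b2 [Ha2 Hb2 ->]]].
  exists (a1 + a2), (b1 + b2); split; [exact: AD|exact: BD|].
  by rewrite addrACA.
- move=> r _ [a [b [Ha Hb ->]]]; exists (r * a), (r * b); split; [exact: AM|exact: BM|].
  by rewrite mulrDr.
Qed.

Lemma idealZ (I : S -> Prop) c p : is_ideal I -> I p -> I (c *: p).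
Proof. by move=> HI Hp; rewrite -mul_mpolyC; apply: idealM. Qed.

Lemma idealB (I : S -> Prop) p q : is_ideal I -> I p -> I q -> I (p - q).
Proof.
move=> HI Hp Hq; apply: idealD => //; rewrite -scaleN1r; exact: idealZ.
Qed.

Lemma ideal_big (I : S -> Prop) (r : seq mon) (P : pred mon) (F : mon -> S) :
  is_ideal I -> (forall m, P m -> I (F m)) -> I (\sum_(m <- r | P m) F m).
Proof. move=> [H0 HD _] HF; apply: big_ind => //; exact: HF. Qed.

Lemma gen_ideal_ind (G : S -> Prop) (P : S -> Prop) :
  P 0 -> (forall a b, P a -> P b -> P (a + b)) ->
  (forall g c m, G g -> P (c *: (g * 'X_[m]))) ->
  forall p, gen_ideal G p -> P p.
Proof.
move=> P0 PD PG p Hp.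
have HI : is_ideal (fun p => forall r, P (r * p)).
  split.
  - by move=> r; rewrite mulr0.
  - by move=> a b Ha Hb r; rewrite mulrDr; apply: PD.
  - by move=> r a Ha s; rewrite mulrA.
suff : forall r, P (r * p) by move/(_ 1); rewrite mul1r.
apply: (Hp _ HI) => g Gg r.
rewrite (mpolyE r) big_distrl /=; apply: big_ind => // m _.
by rewrite -scalerAl mulrC; apply: PG.
Qed.

Lemma size_gen c (g : S) m : (size (msupp (c *: (g * 'X_[m]))) <= size (msupp g))%N.
Proof.
apply: (@leq_trans (size (msupp (g * 'X_[m])))).
  apply: uniq_leq_size; [exact: msupp_uniq | exact: msuppZ_le].
by rewrite (perm_size (msuppMX _ _)) size_map.
Qed.

Lemma mpolyX_neq0 m : ('X_[m] : S) != 0.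
Proof. by rewrite -msupp_eq0 msuppX. Qed.

Section Lead.
Variable le : rel mon.
Hypothesis Hle : monomial_order le.

Lemma lead_seq (s : seq mon) :
  let l := foldr (fun m acc => if le acc m then m else acc) 0%MM s in
  (s != [::] -> l \in s) /\ (forall m, m \in s -> le m l).
Proof.
case: Hle => Hr Ha Ht Htot [H0 _].
elim: s => [|x s [IH1 IH2]] //= .
set l' := foldr _ _ s.
split.
  move=> _; case: ifP => Hx; first by rewrite mem_head.
  have sn : s != [::].
    apply/negP => /eqP Es; move: Hx; rewrite /l' Es /= H0 //.
  by rewrite in_cons IH1 ?orbT.
move=> m; rewrite in_cons => /orP [/eqP ->|Hm].
  case: ifP => Hx; first exact: Hr.
  by case/orP: (Htot x l') => // H; rewrite H in Hx.
have Hml := IH2 _ Hm.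
case: ifP => Hx //; exact: Ht Hml Hx.
Qed.

Lemma lead_mon_in (f : S) : f != 0 -> lead_mon le f \in msupp f.
Proof.
move=> f0; apply: (lead_seq (msupp f)).1; by rewrite msupp_eq0.
Qed.

Lemma lead_mon_max (f : S) m : m \in msupp f -> le m (lead_mon le f).
Proof. exact: (lead_seq (msupp f)).2. Qed.

Lemma lead_monX m : lead_mon le ('X_[m] : S) = m.
Proof. by case: Hle => _ _ _ _ [H0 _]; rewrite /lead_mon msuppX /= H0. Qed.

Lemma lead_mon_sub (f g : S) : g != 0 -> {subset msupp g <= msupp f} ->
  lead_mon le f \in msupp g -> lead_mon le g = lead_mon le f.
Proof.
case: Hle => _ Ha _ _ _ g0 Hs Hf.
apply: Ha; apply/andP; split.
  by apply: lead_mon_max; apply: Hs; apply: lead_mon_in.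
exact: lead_mon_max.
Qed.
End Lead.

Definition Mb (I : S -> Prop) (m : mon) : bool :=
  if excluded_middle_informative (I 'X_[m]) then true else false.

Lemma MbP (I : S -> Prop) m : Mb I m <-> I 'X_[m].
Proof. by rewrite /Mb; case: excluded_middle_informative. Qed.

Definition rho (I : S -> Prop) (p : S) : S :=
  \sum_(m <- msupp p | Mb I m) p@_m *: 'X_[m].
Definition phi (I : S -> Prop) (p : S) : S := p - rho I p.

Lemma coef_rho I p k : (rho I p)@_k = if Mb I k then p@_k else 0.
Proof.
rewrite /rho raddf_sum /=.
under eq_bigr => m _ do rewrite mcoeffZ mcoeffX.
rewrite big_mkcond /=.
case Hk: (k \in msupp p).
  rewrite (bigD1_seq k) //= ?msupp_uniq // eqxx mulr1 big1 ?addr0.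
    by case: (Mb I k).
  by move=> i /negbTE; rewrite eq_sym => ->; rewrite mulr0; case: (Mb I i).
rewrite big1_seq.
  by move/negbT: Hk; rewrite -mcoeff_eq0 => /eqP ->; case: (Mb I k).
move=> i Hi; have -> : (i == k) = false.
  by apply/negbTE; apply: contraNneq (negbT Hk) => <-.
by rewrite mulr0; case: (Mb I i).
Qed.

Lemma coef_phi I p k : (phi I p)@_k = if Mb I k then 0 else p@_k.
Proof. by rewrite /phi mcoeffB coef_rho; case: (Mb I k); rewrite ?subrr ?subr0. Qed.

Lemma phiD I a b : phi I (a + b) = phi I a + phi I b.
Proof.
by apply/mpolyP => k; rewrite mcoeffD !coef_phi mcoeffD; case: (Mb I k); rewrite ?addr0.
Qed.

Lemma phi0 I : phi I 0 = 0.
Proof. by apply/mpolyP => k; rewrite coef_phi mcoeff0; case: (Mb I k). Qed.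

Lemma msupp_phi I p : {subset msupp (phi I p) <= msupp p}.
Proof.
by move=> k; rewrite !mcoeff_msupp coef_phi; case: (Mb I k); rewrite ?eqxx.
Qed.

Lemma msupp_phiM I p k : k \in msupp (phi I p) -> ~~ Mb I k.
Proof. by rewrite mcoeff_msupp coef_phi; case: (Mb I k); rewrite ?eqxx. Qed.

Lemma phi_id I p : (forall k, k \in msupp p -> ~~ Mb I k) -> phi I p = p.
Proof.
move=> H; apply/mpolyP => k; rewrite coef_phi.
case Hk: (Mb I k) => //.
apply/esym/eqP; rewrite mcoeff_eq0; apply/negP => /H; by rewrite Hk.
Qed.

Lemma phi_in I p : is_ideal I -> I p -> I (phi I p).
Proof.
move=> HI Hp; apply: idealB => //; apply: ideal_big => // m /MbP Hm.
exact: idealZ.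
Qed.

Lemma phi_small I p : is_ideal I -> I p -> (size (msupp (phi I p)) <= 1)%N ->
  phi I p = 0.
Proof.
move=> HI Hp; set q := phi I p => Hs.
have Iq : I q by exact: phi_in.
case Es: (msupp q) Hs => [|x [|y s]] //= _.
  by apply: msuppnil0.
have Hx : x \in msupp q by rewrite Es mem_head.
have nM := msupp_phiM Hx.
have Eq : q = q@_x *: 'X_[x] by rewrite {1}(mpolyE q) Es big_seq1.
have qx0 : q@_x != 0 by rewrite -mcoeff_msupp.
have : I 'X_[x].
  have -> : ('X_[x] : S) = (q@_x)^-1 *: q by rewrite {2}Eq scalerA mulVf // scale1r.
  exact: idealZ.
by move/MbP; rewrite (negbTE nM).
Qed.

Lemma phi_binom (I J : S -> Prop) h : is_ideal I -> is_ideal J ->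
  (forall p, J p -> I p) -> J h -> (size (msupp h) <= 2)%N -> J (phi I h).
Proof.
move=> HI HJ JI Jh Hs.
case: (boolP (has (Mb I) (msupp h))) => Hh; last first.
  rewrite phi_id //; move=> k Hk; apply/negP => Mk.
  by move/hasPn: Hh => /(_ k Hk); rewrite Mk.
rewrite phi_small //; first exact: ideal0; first exact: JI.
have H1 : (size (msupp (phi I h)) <= size (filter (predC (Mb I)) (msupp h)))%N.
  apply: uniq_leq_size; first exact: msupp_uniq.
  move=> k Hk; rewrite mem_filter /= (msupp_phiM Hk).
  exact: msupp_phi Hk.
move: H1; rewrite size_filter.
have := count_predC (Mb I) (msupp h).
move: Hh; rewrite has_count. lia.
Qed.

End Aux.

Theorem mainTheorem12 (K : fieldType) (n : nat) (le : rel 'X_{1..n})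
  (J E : {mpoly K[n]} -> Prop) :
  monomial_order le ->
  is_binomial_ideal J ->
  is_monomial_ideal E ->
  ideal_eq (ideal_sum J E) (ideal_sum J (Gnice_closure le J E)).
Proof.
move=> Hle [GJ [GJb EJ]] [GE [GEm EE]].
have HJ : is_ideal J := ideal_eq_ideal EJ (gen_ideal_is_ideal GJ).
have HE : is_ideal E := ideal_eq_ideal EE (gen_ideal_is_ideal GE).
set JE := ideal_sum J E.
have HJE : is_ideal JE := ideal_sum_ideal HJ HE.
have JsubJE : forall p, J p -> JE p.
  by move=> p Hp; exists p, 0; split=> //; [exact: ideal0 | rewrite addr0].
have EsubJE : forall p, E p -> JE p.
  by move=> p Hp; exists 0, p; split=> //; [exact: ideal0 | rewrite add0r].
pose F : {mpoly K[n]} -> Prop := gen_ideal (fun q : {mpoly K[n]} => exists m, JE 'X_[m] /\ q = 'X_[m]).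
have HF : is_ideal F := gen_ideal_is_ideal _.
have FsubJE : forall p, F p -> JE p.
  by apply: gen_ideal_min => // q [m [Hm ->]].
have EsubF : forall p, E p -> F p.
  move=> p /EE Hp; apply: (gen_ideal_min HF _ Hp) => g Hg.
  case: (GEm g Hg) => m Em; apply: gen_ideal_sub; exists m; split; last done.
  rewrite -Em; apply: EsubJE; apply/EE; exact: gen_ideal_sub.
have Fmon : is_monomial_ideal F.
  exists (fun q => exists m, JE 'X_[m] /\ q = 'X_[m]); split; last by move=> p.
  by move=> g [m [_ ->]]; exists m.
have core : forall f, JE f -> J (phi JE f).
  move=> _ [a [e [Ha He ->]]]; rewrite phiD.
  have -> : phi JE e = 0.
    move/EE: He; apply: (gen_ideal_ind (P := fun x => phi JE x = 0)).
    - exact: phi0.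
    - by move=> x y Hx Hy; rewrite phiD Hx Hy addr0.
    move=> g c m Gg; apply: phi_small => //.
      apply: EsubJE; apply: idealZ => //.
      rewrite mulrC; apply: idealM => //; apply/EE; exact: gen_ideal_sub.
    have H1 := size_gen c g m.
    have H2 := uniq_leq_size (msupp_uniq _) (@msupp_phi _ _ JE (c *: (g * 'X_[m]))).
    have H3 : size (msupp g) = 1%N by case: (GEm g Gg) => m0 ->; rewrite msuppX.
    rewrite H3 in H1; exact: leq_trans H2 H1.
  rewrite addr0; move/EJ: Ha; apply: (gen_ideal_ind (P := fun x => J (phi JE x))).
  - by rewrite phi0; exact: ideal0.
  - by move=> x y Hx Hy; rewrite phiD; apply: idealD.
  move=> g c m Gg; apply: phi_binom => //.
    apply: idealZ => //; rewrite mulrC; apply: idealM => //; apply/EJ; exact: gen_ideal_sub.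
  exact: leq_trans (size_gen _ _ _) (GJb _ Gg).
have HJF : is_ideal (ideal_sum J F) := ideal_sum_ideal HJ HF.
have JFsubJE : forall p, ideal_sum J F p -> JE p.
  move=> _ [a [b [Ha Hb ->]]]; apply: idealD => //; [exact: JsubJE | exact: FsubJE].
have Fnice : G_nice le J F.
  move=> p; split.
  - apply: gen_ideal_min.
      exact: ideal_sum_ideal (gen_ideal_is_ideal _) (gen_ideal_is_ideal _).
    move=> q [f [Hf f0 ->]].
    have Hf' := JFsubJE _ Hf.
    set u := lead_mon le f.
    case: (boolP (Mb JE u)) => Mu.
    + exists 0, 'X_[u]; split; [exact: ideal0 (gen_ideal_is_ideal _) | | by rewrite add0r].
      apply: gen_ideal_sub; exists 'X_[u]; split.
      * apply: gen_ideal_sub; exists u; split => //; exact/MbP.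
      * exact: mpolyX_neq0.
      * by rewrite lead_monX.
    + exists 'X_[u], 0; split; [ | exact: ideal0 (gen_ideal_is_ideal _) | by rewrite addr0].
      have uin : u \in msupp f by apply: lead_mon_in.
      have ug : u \in msupp (phi JE f).
        by rewrite mcoeff_msupp coef_phi (negbTE Mu) -mcoeff_msupp.
      have g0 : phi JE f != 0 by rewrite -msupp_eq0; apply/eqP => E0; rewrite E0 in ug.
      apply: gen_ideal_sub; exists (phi JE f); split.
      * exact: core.
      * exact: g0.
      * by rewrite (lead_mon_sub Hle g0 (@msupp_phi _ _ JE f) ug).
  - move=> [a [b [Ha Hb ->]]]; apply: (@idealD _ _ (init_ideal le (ideal_sum J F))); first exact: (gen_ideal_is_ideal _).
    + apply: (gen_ideal_min (gen_ideal_is_ideal _) _ Ha) => q [f [Hf f0 ->]].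
      apply: gen_ideal_sub; exists f; split => //; exists f, 0; split => //;
        [exact: ideal0 | by rewrite addr0].
    + apply: (gen_ideal_min (gen_ideal_is_ideal _) _ Hb) => q [f [Hf f0 ->]].
      apply: gen_ideal_sub; exists f; split => //; exists 0, f; split => //;
        [exact: ideal0 | by rewrite add0r].
move=> p; split.
- move=> [a [b [Ha Hb ->]]]; exists a, b; split=> // F' _ HEF' _; exact: HEF'.
- move=> [a [b [Ha Hb ->]]].
  case: (FsubJE _ (Hb F Fmon EsubF Fnice)) => [a' [e [Ha' He ->]]].
  exists (a + a'), e; split=> //; [exact: idealD | by rewrite addrA].
Qed.
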